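(* Let $H$ be a Hilbert space over $\mathbb{R}$ or $\mathbb{C}$, $V\subseteq H$, $n\ge1$, and let $C_1,\dots,C_n$ be closed convex subsets of $H$ with $0\in C_n\subseteq C_{n-1}\subseteq\cdots\subseteq C_1\subseteq V$. Let $P_{C_i}:V\to V$ be the metric projection onto $C_i$ and $P=P_{C_n}\circ\cdots\circ P_{C_1}$. Then $P_{C_n}$ is the unique pseudo-inverse of $P$ (with respect to the norm of $H$). In particular, for a closed convex $C\subseteq V$ with $0\in C$, $P_C$ is its own unique pseudo-inverse.
   Context: The metric projection onto a nonempty closed convex subset $C$ of a Hilbert space maps each point to its unique nearest point in $C$. For subsets $V,W$ of normed spaces and $T:V\to W$, an operator $S:W\to V$ is a pseudo-inverse of $T$ if: (BAS) for every $w\in W$, the minimum $m_w=\min_{v\in V}\|T(v)-w\|$ is attained, the norm attains its minimum on $\{v\in V:\|T(v)-w\|=m_w\}$, and $S(w)\in\arg\min\{\|v\|:v\in V,\ \|T(v)-w\|=m_w\}$; and (MP2) $S\circ T\circ S=S$. *)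

(* Defs.v *)
From HB Require Import structures.
From mathcomp Require Import all_boot all_order all_algebra.
From mathcomp Require Import all_classical all_reals all_analysis.
Set Implicit Arguments. Unset Strict Implicit. Unset Printing Implicit Defensive.
Import Order.TTheory GRing.Theory Num.Theory.
Import numFieldNormedType.Exports.
Local Open Scope classical_set_scope.
Local Open Scope ring_scope.

Definition hilbert_inner_product (R : realType) (E : completeNormedModType R)
    (ip : E -> E -> R) : Prop :=
  [/\ (forall x y, ip x y = ip y x),
      (forall a x y z, ip (a *: x + y) z = a * ip x z + ip y z),
      (forall x, 0 <= ip x x),
      (forall x, ip x x = 0 -> x = 0) &
      (forall x, `|x| ^+ 2 = ip x x)].

Definition convex_subset (R : realType) (E : completeNormedModType R)
    (A : set E) : Prop :=
  @convex_set R E A.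

Definition metric_proj (R : realType) (E : completeNormedModType R)
    (C : set E) (x : E) : E :=
  xget 0 [set p | C p /\ forall y, C y -> `|x - p| <= `|x - y|].

Fixpoint comp_proj (R : realType) (E : completeNormedModType R)
    (C : nat -> set E) (k : nat) : E -> E :=
  match k with
  | 0 => id
  | k'.+1 => metric_proj (C k'.+1) \o comp_proj C k'
  end.

(* S : W -> V is a pseudo-inverse of T : V -> W (both modelled as functions
   E -> E, only their values on V resp. W matter). *)
Definition is_pseudo_inverse (R : realType) (E : completeNormedModType R)
    (V W : set E) (T S : E -> E) : Prop :=
  (forall w, W w ->
     exists v0, V v0 /\ (forall v, V v -> `|T v0 - w| <= `|T v - w|) /\
     let A := [set v | V v /\ `|T v - w| = `|T v0 - w|] in
     (exists a, A a /\ forall b, A b -> `|a| <= `|b|) /\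
     (A (S w) /\ forall b, A b -> `|S w| <= `|b|)) /\
  (forall w, W w -> S (T (S w)) = S w).

(* Main.v *)
Require Import Defs.
From HB Require Import structures.
From mathcomp Require Import all_boot all_order all_algebra.
From mathcomp Require Import all_classical all_reals all_analysis.
From mathcomp Require Import lra.
Import Order.TTheory GRing.Theory Num.Theory.
Import numFieldNormedType.Exports.
Local Open Scope classical_set_scope.
Local Open Scope ring_scope.
Set Implicit Arguments. Unset Strict Implicit.

Section H.
Variables (R : realType) (E : completeNormedModType R) (ip : E -> E -> R).
Hypothesis Hip : hilbert_inner_product ip.

Let ipC x y : ip x y = ip y x. Proof. by case: Hip. Qed.
Let ipL a x y z : ip (a *: x + y) z = a * ip x z + ip y z. Proof. by case: Hip. Qed.
Let ipN x : `|x| ^+ 2 = ip x x. Proof. by case: Hip. Qed.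

Lemma ip0l z : ip 0 z = 0.
Proof. have := ipL 1 0 0 z; rewrite scale1r addr0 mul1r; lra. Qed.
Lemma ipDl x y z : ip (x + y) z = ip x z + ip y z.
Proof. by rewrite -[x]scale1r ipL mul1r scale1r. Qed.
Lemma ipZl a x z : ip (a *: x) z = a * ip x z.
Proof. by rewrite -[a *: x]addr0 ipL ip0l addr0. Qed.
Lemma ipNl x z : ip (- x) z = - ip x z.
Proof. by rewrite -scaleN1r ipZl mulN1r. Qed.
Lemma ipDr x y z : ip z (x + y) = ip z x + ip z y.
Proof. by rewrite ipC ipDl !(ipC z). Qed.
Lemma ipZr a x z : ip z (a *: x) = a * ip z x.
Proof. by rewrite ipC ipZl ipC. Qed.
Lemma ipNr x z : ip z (- x) = - ip z x.
Proof. by rewrite ipC ipNl ipC. Qed.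

Lemma normD2 u v : `|u + v| ^+ 2 = `|u| ^+ 2 + 2 * ip u v + `|v| ^+ 2.
Proof. rewrite !ipN ipDl !ipDr (ipC v u); lra. Qed.
Lemma normB2 u v : `|u - v| ^+ 2 = `|u| ^+ 2 - 2 * ip u v + `|v| ^+ 2.
Proof. rewrite normD2 ipNr normrN; lra. Qed.

Lemma convP (C : set E) x y (t : R) :
  convex_subset C -> C x -> C y -> 0 <= t -> t <= 1 -> C (t *: x + (1 - t) *: y).
Proof.
move=> cC Cx Cy t0 t1.
have ht : Itv.spec (@Itv.num_sem R) (Itv.Real `[0%Z, 1%Z]) t.
  by rewrite /Itv.spec /Itv.num_sem /= in_itv /= t0 t1 ?ger0_real.
have := cC x y (Itv.mk ht).
rewrite !inE => /(_ Cx Cy).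
by [].
Qed.

Lemma mid_in (C : set E) p q : convex_subset C -> C p -> C q -> C ((2:R)^-1 *: (p + q)).
Proof.
move=> cC Cp Cq.
have -> : 2^-1 *: (p + q) = 2^-1 *: p + (1 - 2^-1) *: q.
  rewrite scalerDr; congr (_ + _); congr (_ *: _).
  have h : (2:R) != 0 by [].
  apply: (mulfI h); rewrite mulrBr mulfV // mulr1; lra.
apply: convP => //; rewrite ?invr_ge0 ?invf_le1 //; lra.
Qed.

Lemma mid_eq (x p q : E) : (x - p) + (x - q) = (2:R) *: (x - (2:R)^-1 *: (p + q)).
Proof.
rewrite scalerBr scalerA mulfV // scale1r scaler_nat mulr2n opprD addrACA //.
Qed.

Lemma proj_uniq (C : set E) x p q : convex_subset C -> C p -> C q ->
  (forall y, C y -> `|x - p| <= `|x - y|) -> `|x - q| <= `|x - p| -> q = p.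
Proof.
move=> cC Cp Cq hp hq.
have hm := hp _ (mid_in cC Cp Cq).
have par := normD2 (x - p) (x - q).
have par2 := normB2 (x - p) (x - q).
rewrite mid_eq normrZ ger0_norm // in par.
have e1 : (x - p) - (x - q) = q - p by rewrite opprB [LHS]addrC addrA subrK.
rewrite e1 in par2.
have hu := normr_ge0 (x - p).
have hv := normr_ge0 (x - q).
have hw := normr_ge0 (x - 2^-1 *: (p + q)).
have : `|q - p| ^+ 2 <= 0 by nra.
move=> h; apply/eqP; rewrite -subr_eq0 -normr_eq0.
have h2 := sqr_ge0 `|q - p|.
have : `|q - p| ^+ 2 = 0 by apply/le_anti; rewrite h h2.
by move/eqP; rewrite expf_eq0 /=.
Qed.


Lemma sq0 (z : E) : `|z| ^+ 2 <= 0 -> z = 0.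
Proof.
move=> h; apply/eqP; rewrite -normr_eq0.
have h2 := sqr_ge0 `|z|.
have : `|z| ^+ 2 = 0 by apply/le_anti; rewrite h h2.
by move/eqP; rewrite expf_eq0 /=.
Qed.

Lemma proj_norm (C : set E) x p : convex_subset C -> C 0 -> C p ->
  (forall y, C y -> `|x - p| <= `|x - y|) ->
  `|p| <= `|x| /\ (`|x| <= `|p| -> p = x).
Proof.
move=> cC C0 Cp hp.
set a := ip (x - p) p.
have a0 : 0 <= a.
  rewrite leNgt; apply/negP => an.
  set P := `|p| ^+ 2.
  have P0 : 0 <= P by rewrite /P sqr_ge0.
  have Pa : 0 < P - a by lra.
  set t := - a / (P - a).
  have t0 : 0 < t by rewrite /t divr_gt0 //; lra.
  have tPa : t * (P - a) = - a by rewrite /t mulfVK //; lra.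
  have t1 : t <= 1.
    rewrite /t ler_pdivrMr //; lra.
  have Cz := convP (t:=1 - t) cC Cp C0.
  rewrite scaler0 addr0 in Cz.
  have := hp _ (Cz ltac:(lra) ltac:(lra)).
  have -> : x - (1 - t) *: p = (x - p) + t *: p.
    by rewrite scalerBl scale1r opprB addrCA addrC.
  move=> hle.
  have e := normD2 (x - p) (t *: p).
  rewrite ipZr normrZ gtr0_norm // exprMn -/a -/P in e.
  have hA := normr_ge0 (x - p).
  have hB := normr_ge0 (x - p + t *: p).
  have : `|x - p| ^+ 2 <= `|x - p + t *: p| ^+ 2.
    by rewrite lerXn2r // nnegrE.
  rewrite e => h1.
  have h2 : 0 <= 2 * a + t * P.
    have : 0 <= t * (2 * a + t * P) by rewrite mulrDr; nra.
    by rewrite pmulr_rge0.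
  nra.
have e := normD2 (x - p) p.
rewrite subrK -/a in e.
have hA := normr_ge0 (x - p).
have hx := normr_ge0 x.
have hpp := normr_ge0 p.
split.
  have : `|p| ^+ 2 <= `|x| ^+ 2 by rewrite e; have := sqr_ge0 `|x - p|; lra.
  move=> h; rewrite leNgt; apply/negP => hlt; nra.
move=> hxp.
have : `|x| ^+ 2 <= `|p| ^+ 2 by rewrite lerXn2r // nnegrE.
rewrite e => h.
have : `|x - p| ^+ 2 <= 0 by nra.
by move/sq0/eqP; rewrite subr_eq0 => /eqP.
Qed.


Lemma small_inv (e : R) : 0 < e -> exists N, forall n, (N <= n)%N -> n.+1%:R^-1 < e.
Proof.
move=> e0; exists (Num.trunc e^-1) => n Nn.
have h1 := truncnS_gt e^-1.
have h2 : (Num.trunc e^-1).+1%:R <= n.+1%:R :> R by rewrite ler_nat.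
rewrite -[e]invrK ltf_pV2 ?posrE ?invr_gt0 //; lra.
Qed.

Lemma inv_le1 (n : nat) : 0 < n.+1%:R^-1 :> R /\ n.+1%:R^-1 <= 1 :> R.
Proof. by rewrite invr_gt0 ltr0n invf_le1 ?ler1n ?ltr0n. Qed.

Lemma inv_mono (m n : nat) : (m <= n)%N -> n.+1%:R^-1 <= m.+1%:R^-1 :> R.
Proof. by move=> mn; rewrite lef_pV2 ?posrE ?ltr0n // ler_nat. Qed.

Lemma aux1 (u d e : R) : 0 <= u -> 0 <= d -> 0 < e -> e <= 1 -> u < d + e ->
  u ^+ 2 <= d ^+ 2 + e * (2 * d + 1).
Proof. move=> *; nra. Qed.

Lemma aux2 (d w : R) : 0 <= d -> d <= w -> d ^+ 2 <= w ^+ 2.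
Proof. move=> *; nra. Qed.

Lemma aux3 (z a b d e : R) : 0 <= z -> 0 <= d -> 0 < e -> 0 <= b -> b <= a ->
  z ^+ 2 <= 2 * (a * (2 * d + 1)) + 2 * (b * (2 * d + 1)) ->
  a * (4 * (2 * d + 1)) < e ^+ 2 -> z < e.
Proof. move=> *; nra. Qed.

Lemma aux4 (M U I V W D em en d : R) : 4 * M = U + 2 * I + V -> W = U - 2 * I + V ->
  U <= D + em * (2 * d + 1) -> V <= D + en * (2 * d + 1) -> D <= M ->
  W <= 2 * (em * (2 * d + 1)) + 2 * (en * (2 * d + 1)).
Proof. move=> *; nra. Qed.

Lemma aux5 (A B C D d eps : R) : B < eps / 2 -> C < eps / 2 -> D < d + C ->
  A <= D + B -> A <= d + eps.
Proof. move=> *; lra. Qed.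

Lemma proj_ex (C : set E) x : closed C -> convex_subset C -> C !=set0 ->
  exists p, C p /\ forall y, C y -> `|x - p| <= `|x - y|.
Proof.
move=> clC cC [c0 Cc0].
pose S := [set r | exists2 y, C y & r = `|x - y|].
have S0 : S !=set0 by exists `|x - c0|; exists c0.
have lS : has_lbound S by exists 0 => r [y _ ->].
set d := inf S.
have hd : forall y, C y -> d <= `|x - y|.
  by move=> y Cy; apply: ge_inf => //; exists y.
have d0 : 0 <= d by apply: lb_le_inf S0 _ => r [y _ ->].
have ex : forall n : nat, exists y, C y /\ `|x - y| < d + n.+1%:R^-1.
  move=> n; have : inf S < d + n.+1%:R^-1 by rewrite ltrDl invr_gt0 ltr0n.
  by move/(inf_lt S0) => [r [y Cy ->] hr]; exists y.
have [a ha] := choice ex.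
have key : forall m n, `|a m - a n| ^+ 2 <=
    2 * (m.+1%:R^-1 * (2 * d + 1)) + 2 * (n.+1%:R^-1 * (2 * d + 1)).
  move=> m n.
  have [Cm hm] := ha m; have [Cn hn] := ha n.
  have hmid := hd _ (mid_in cC Cm Cn).
  have par := normD2 (x - a m) (x - a n).
  have par2 := normB2 (x - a m) (x - a n).
  rewrite mid_eq normrZ ger0_norm // in par.
  have e1 : (x - a m) - (x - a n) = a n - a m.
    by rewrite opprB [LHS]addrC addrA subrK.
  rewrite e1 distrC in par2.
  have [em1 em2] := inv_le1 m; have [en1 en2] := inv_le1 n.
  have hu := normr_ge0 (x - a m).
  have hv := normr_ge0 (x - a n).
  have hw := normr_ge0 (x - 2^-1 *: (a m + a n)).
  have hu2 := aux1 hu d0 em1 em2 hm.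
  have hv2 := aux1 hv d0 en1 en2 hn.
  have hw2 := aux2 d0 hmid.
  have e4 : (2:R) ^+ 2 = 4 by rewrite expr2; lra.
  rewrite exprMn e4 in par.
  exact: (aux4 par par2 hu2 hv2 hw2).
have cv : cvg (a @ \oo).
  apply: cauchy_cvg; apply: cauchy_exP => e e0.
  have K0 : 0 < e ^+ 2 / (4 * (2 * d + 1)) by apply: divr_gt0; [exact: exprn_gt0| lra].
  have [N HN] := small_inv K0.
  exists (a N); exists N => // m Nm.
  rewrite -ball_normE /ball_ /=.
  have k := key N m.
  have hNm := inv_mono Nm.
  have hN := HN N (leqnn N).
  rewrite ltr_pdivlMr in hN; last lra.
  have hz := normr_ge0 (a N - a m).
  have [em1 em2] := inv_le1 m.
  exact: (aux3 hz d0 e0 (ltW em1) hNm k hN).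
have /cvg_ex [l hl] := cv.
have Cl : C l.
  by apply: (closed_cvg C clC _ l hl); apply: nearW => n; have [] := ha n.
exists l; split => // y Cy.
apply: le_trans (hd _ Cy).
apply/ler_addgt0Pr => eps eps0.
have eps2 : 0 < eps / 2 by lra.
have [N1 _ H1] := cvgr_dist_lt _ _ hl _ eps2.
have [N2 H2] := small_inv eps2.
have h1 := H1 (maxn N1 N2) (leq_maxl _ _).
have h2 := H2 (maxn N1 N2) (leq_maxr _ _).
have [_ h3] := ha (maxn N1 N2).
have h4 := ler_distD (a (maxn N1 N2)) x l.
rewrite (distrC (a _)) in h4.
exact: (aux5 h1 h2 h3 h4).
Qed.


Lemma proj_spec (C : set E) x : closed C -> convex_subset C -> C !=set0 ->
  C (metric_proj C x) /\ forall y, C y -> `|x - metric_proj C x| <= `|x - y|.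
Proof. move=> clC cC ne; exact: (xgetPex 0 (proj_ex x clC cC ne)). Qed.

Lemma proj_id (C : set E) v : closed C -> convex_subset C -> C v -> metric_proj C v = v.
Proof.
move=> clC cC Cv.
have [Cp hp] := proj_spec v clC cC (ex_intro _ v Cv).
apply/esym; apply: (proj_uniq cC Cp Cv hp).
by rewrite subrr normr0 normr_ge0.
Qed.

Lemma part1 (V : set E) (n : nat) (C : nat -> set E) :
  (1 <= n)%N ->
  (forall i, (1 <= i <= n)%N -> closed (C i) /\ convex_subset (C i)) ->
  C n 0 ->
  (forall i, (1 <= i < n)%N -> C i.+1 `<=` C i) ->
  C 1%N `<=` V ->
  (is_pseudo_inverse V V (comp_proj C n) (metric_proj (C n)) /\
   forall S, is_pseudo_inverse V V (comp_proj C n) S ->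
     forall w, V w -> S w = metric_proj (C n) w).
Proof.
move=> n1 hC C0 nest C1V.
have sub' : forall j, (j <= n)%N -> forall i, (1 <= i <= j)%N -> C j `<=` C i.
  elim=> [|j IH] jn i /andP [i1 ij]; first by move: (leq_trans i1 ij).
  have [->|ne] := eqVneq i j.+1; first by [].
  have ij' : (i <= j)%N by rewrite -ltnS ltn_neqAle ne ij.
  have j1 : (1 <= j)%N := leq_trans i1 ij'.
  move=> y /(nest j); rewrite j1 jn => /(_ isT) Cjy.
  by apply: (IH (ltnW jn) i); rewrite ?i1 ?ij'.
have sub : forall i, (1 <= i <= n)%N -> C n `<=` C i.
  by move=> i hi; apply: sub' (leqnn n) i hi.
have Cn1 : (1 <= n <= n)%N by rewrite n1 leqnn.
have [clCn cCn] := hC n Cn1.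
have neCn : C n !=set0 by exists 0.
have Vn : C n `<=` V by move=> y /(sub 1%N); rewrite leqnn n1 => /(_ isT) /C1V.
have fix_ : forall k, (k <= n)%N -> forall v, C n v -> comp_proj C k v = v.
  elim=> [|k IH] kn v Cv //=.
  rewrite IH ?(ltnW kn) //.
  have hk : (1 <= k.+1 <= n)%N by rewrite kn.
  have [clk ck] := hC _ hk.
  by apply: proj_id => //; apply: sub hk _ Cv.
have nrm : forall k, (k <= n)%N -> forall v, `|comp_proj C k v| <= `|v| /\
    (`|v| <= `|comp_proj C k v| -> comp_proj C k v = v).
  elim=> [|k IH] kn v /=; first by split.
  have [h1 h2] := IH (ltnW kn) v.
  set u := comp_proj C k v.
  have hk : (1 <= k.+1 <= n)%N by rewrite kn.
  have [clk ck] := hC _ hk.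
  have C0k : C k.+1 0 by apply: sub hk _ C0.
  have [CP NP] := proj_spec u clk ck (ex_intro _ 0 C0k).
  have [g1 g2] := proj_norm ck C0k CP NP.
  split; first exact: le_trans g1 h1.
  move=> hv.
  have hu : `|u| <= `|metric_proj (C k.+1) u| := le_trans h1 hv.
  rewrite (g2 hu); apply: h2; exact: le_trans hv g1.
have inCn : forall v, C n (comp_proj C n v).
  move=> v.
  have e : forall m, comp_proj C m.+1 v = metric_proj (C m.+1) (comp_proj C m v) by [].
  have := e n.-1; rewrite prednK // => ->.
  by have [] := proj_spec (comp_proj C n.-1 v) clCn cCn neCn.
set P := comp_proj C n.
have charP : forall w b, `|P b - w| = `|metric_proj (C n) w - w| -> P b = metric_proj (C n) w.
  move=> w b h.
  have [Cp hp] := proj_spec w clCn cCn neCn.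
  apply: (proj_uniq cCn Cp (inCn b) hp).
  by rewrite distrC h distrC.
have fixn : forall v, C n v -> P v = v by move=> v; apply: fix_.
split.
  split => w Vw; last first.
    have [Cp _] := proj_spec w clCn cCn neCn.
    by rewrite fixn // proj_id.
  set p := metric_proj (C n) w.
  have [Cp hp] := proj_spec w clCn cCn neCn.
  have Pp : P p = p by apply: fixn.
  have minA : forall b, V b /\ `|P b - w| = `|P p - w| -> `|p| <= `|b|.
    move=> b [Vb hb]; rewrite Pp in hb.
    have hPb : P b = p := charP w b hb; rewrite -hPb.
    by have [] := nrm n (leqnn n) b.
  exists p; split; first exact: Vn.
  split.
    move=> v Vv; rewrite Pp distrC (distrC (P v)); exact: hp (inCn v).
  simpl; split; first by exists p; split => //; split => //; exact: Vn.
  by split => //; split => //; exact: Vn.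
move=> S [hB hM] w Vw.
set p := metric_proj (C n) w.
have [Cp hp] := proj_spec w clCn cCn neCn.
have Pp : P p = p by apply: fixn.
case: (hB w Vw) => v0 [Vv0 [hmin]] /= [_ [[VS hS] hSmin]].
have e0 : `|P v0 - w| = `|p - w|.
  apply/le_anti; apply/andP; split.
    by rewrite -[X in _ <= `|X - _|]Pp; apply: hmin; apply: Vn.
  by rewrite distrC (distrC (P v0)); apply: hp; apply: inCn.
rewrite e0 in hS.
have PS := charP w _ hS.
have hle : `|S w| <= `|p|.
  apply: hSmin; split; first exact: Vn.
  by rewrite Pp e0.
have [_ h2] := nrm n (leqnn n) (S w).
rewrite -/P PS in h2.
by rewrite -(h2 hle).
Qed.

End H.

Unset Implicit Arguments.

Theorem mainTheorem9 (R : realType) (E : completeNormedModType R)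
    (ip : E -> E -> R) (V : set E) (n : nat) (C : nat -> set E) :
  hilbert_inner_product ip ->
  (1 <= n)%N ->
  (forall i, (1 <= i <= n)%N -> closed (C i) /\ convex_subset (C i)) ->
  C n 0 ->
  (forall i, (1 <= i < n)%N -> C i.+1 `<=` C i) ->
  C 1%N `<=` V ->
  (is_pseudo_inverse V V (comp_proj C n) (metric_proj (C n)) /\
   forall S, is_pseudo_inverse V V (comp_proj C n) S ->
     forall w, V w -> S w = metric_proj (C n) w) /\
  (forall D : set E, closed D -> convex_subset D -> D `<=` V -> D 0 ->
     is_pseudo_inverse V V (metric_proj D) (metric_proj D) /\
     forall S, is_pseudo_inverse V V (metric_proj D) S ->
       forall w, V w -> S w = metric_proj D w).
Proof.
move=> Hip n1 hC C0 nest C1V.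
split; first exact: (part1 Hip n1 hC C0 nest C1V).
move=> D clD cD DV D0.
have := @part1 R E ip Hip V 1%N (fun _ => D) (leqnn 1) (fun _ _ => conj clD cD) D0
  (fun i hi => ltac:(by move: hi => /andP [h1 h2]; move: (leq_trans h1 h2))) DV.
by [].
Qed.
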